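(* For a permutation $\pi$ of $[k]$ and $y\in\mathcal{Y}$ let $P_{\pi,y}=\mathrm{conv}\{\mathbbm{1}_{\pi,i}\odot y: i\in\{0,\dots,k\}\}$. Then (i) $\bigcup_{y\in\mathcal{Y},\pi}P_{\pi,y}=[-1,1]^k$; and (ii) for all $f\in\mathcal{F}_k$, all $y,y'\in\mathcal{Y}$ and all permutations $\pi$, the function $L^f(\cdot,y')$ is affine on $P_{\pi,y}$.
   Context: $[k]=\{1,\dots,k\}$, $\mathcal{Y}=\{-1,1\}^k$; $u\odot u'$ entrywise product, $\mathbbm{1}$ all-ones, $(x)_+$ entrywise positive part. $\mathbbm{1}_{\pi,i}$ is the $0/1$ indicator vector of $\{\pi_1,\dots,\pi_i\}$, with $\mathbbm{1}_{\pi,0}=0$. $\mathcal{F}_k$: set functions $f:2^{[k]}\to\mathbb{R}$ that are submodular, increasing and normalized. Lovász extension $F(x)=\max_\pi\sum_{i=1}^kx_{\pi_i}(f(\{\pi_1,..,\pi_i\})-f(\{\pi_1,..,\pi_{i-1}\}))$ for $x\in\mathbb{R}^k_+$; Lovász hinge $L^f(u,y)=F((\mathbbm{1}-u\odot y)_+)$. *)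

(* Defs.v *)
From HB Require Import structures.
From mathcomp Require Import all_boot all_order all_algebra fingroup perm.
Set Implicit Arguments. Unset Strict Implicit. Unset Printing Implicit Defensive.
Import Order.TTheory GRing.Theory Num.Theory.
Local Open Scope ring_scope.

Section Defs.
Variables (R : realFieldType) (k : nat).

Definition is_sign (y : 'I_k -> R) : Prop := forall j, y j = 1 \/ y j = -1.

(* {pi_1, ..., pi_i} (0-based: positions l < i) *)
Definition prefix (pi : {perm 'I_k}) (i : nat) : {set 'I_k} :=
  [set pi l | l : 'I_k & (l < i)%N].

Definition ind (pi : {perm 'I_k}) (i : nat) : 'I_k -> R :=
  fun j => if j \in prefix pi i then 1 else 0.

Definition Ppy (pi : {perm 'I_k}) (y : 'I_k -> R) (u : 'I_k -> R) : Prop :=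
  exists lam : 'I_k.+1 -> R,
    (forall i, 0 <= lam i) /\ \sum_(i < k.+1) lam i = 1 /\
    forall j, u j = \sum_(i < k.+1) lam i * (ind pi i j * y j).

Definition submodular (f : {set 'I_k} -> R) : Prop :=
  forall A B : {set 'I_k}, f (A :|: B) + f (A :&: B) <= f A + f B.
Definition increasing (f : {set 'I_k} -> R) : Prop :=
  forall A B : {set 'I_k}, A \subset B -> f A <= f B.
Definition normalized (f : {set 'I_k} -> R) : Prop := f set0 = 0.
Definition in_Fk f := [/\ submodular f, increasing f & normalized f].

Definition lov_sum (f : {set 'I_k} -> R) (x : 'I_k -> R) (pi : {perm 'I_k}) : R :=
  \sum_(i < k) x (pi i) * (f (prefix pi i.+1) - f (prefix pi i)).

Definition lovasz (f : {set 'I_k} -> R) (x : 'I_k -> R) : R :=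
  \big[Num.max/lov_sum f x 1%g]_(pi : {perm 'I_k}) lov_sum f x pi.

Definition lhinge (f : {set 'I_k} -> R) (u y : 'I_k -> R) : R :=
  lovasz f (fun j => Num.max 0 (1 - u j * y j)).

Definition affine_on (g : ('I_k -> R) -> R) (P : ('I_k -> R) -> Prop) : Prop :=
  exists (a : 'I_k -> R) (b : R), forall u, P u -> g u = \sum_(j < k) a j * u j + b.

End Defs.

(* Main.v *)
From Pilot Require Import Defs.
From HB Require Import structures.
From mathcomp Require Import all_boot all_order all_algebra fingroup perm.
From mathcomp Require Import ring lra zify.
Import Order.TTheory GRing.Theory Num.Theory.
Local Open Scope ring_scope.
Set Implicit Arguments. Unset Strict Implicit. Unset Printing Implicit Defensive.

Notation pref := Pilot.Defs.prefix.
Section Aux.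
Variables (R : realFieldType) (k : nat).
Implicit Types (pi s : {perm 'I_k}) (f : {set 'I_k} -> R) (x : 'I_k -> R).

Lemma mem_pref pi i (l : 'I_k) : (pi l \in pref pi i) = (l < i)%N.
Proof. by rewrite /Defs.prefix mem_imset ?inE //; apply: perm_inj. Qed.

Lemma pref_id pi (j : 'I_k) : j = pi (pi^-1 j)%g.
Proof. by rewrite permKV. Qed.

Lemma pref0 pi : pref pi 0 = set0.
Proof. by apply/setP => j; rewrite (pref_id pi j) mem_pref inE. Qed.

Lemma prefT pi n : (k <= n)%N -> pref pi n = setT.
Proof.
move=> hn; apply/setP => j; rewrite (pref_id pi j) mem_pref inE.
exact: leq_trans (ltn_ord _) hn.
Qed.

Lemma tele0 (g : nat -> R) n : \sum_(i < n) (g i.+1 - g i) = g n - g 0%N.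
Proof.
elim: n => [|n IH]; first by rewrite big_ord0 subrr.
by rewrite big_ord_recr /= IH; lra.
Qed.

Lemma tele (C : nat -> R) r n : (r <= n)%N ->
  \sum_(i < n) (if (r <= i)%N then C i - C i.+1 else 0) = C r - C n.
Proof.
elim: n => [|n IH]; first by rewrite leqn0 => /eqP ->; rewrite big_ord0 subrr.
rewrite leq_eqVlt => /orP[/eqP ->|h].
  rewrite big_ord_recr /= ltnn big1 ?add0r ?subrr //.
  by move=> i _; rewrite leqNgt ltnS (ltnW (ltn_ord i)).
by rewrite big_ord_recr /= IH // -ltnS h; lra.
Qed.

Definition dd f pi (i : nat) := f (pref pi i.+1) - f (pref pi i).
Definition ww f pi (A : {set 'I_k}) :=
  \sum_(i < k) (if pi i \in A then dd f pi i else 0).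

Lemma prefS pi (i : 'I_k) : pref pi i.+1 = pi i |: pref pi i.
Proof.
apply/setP => j; rewrite (pref_id pi j) !inE !mem_pref (inj_eq perm_inj).
by rewrite ltnS leq_eqVlt val_eqE.
Qed.

Lemma ww_le f pi A : Defs.submodular f -> ww f pi A <= f A - f set0.
Proof.
move=> sm.
have -> : f A - f set0 = \sum_(i < k) (f (A :&: pref pi i.+1) - f (A :&: pref pi i)).
  rewrite (tele0 (fun i => f (A :&: pref pi i))) pref0 (prefT _ (leqnn k)) setI0 setIT //.
rewrite /ww; apply: ler_sum => i _; rewrite /dd.
case: ifP => hA.
  have := sm (pref pi i) (A :&: pref pi i.+1).
  have -> : pref pi i :|: (A :&: pref pi i.+1) = pref pi i.+1.
    apply/setP => j; rewrite (pref_id pi j); move: (pi^-1 j)%g => l.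
    rewrite !inE !mem_pref.
    case: (eqVneq l i) => [->|ne]; first by rewrite hA ltnn ltnSn.
    have ne2 : (nat_of_ord l == i) = false := negbTE ne.
    by rewrite [(l < i.+1)%N]ltnS [(l <= i)%N]leq_eqVlt ne2 /= andbC; case: (l < i)%N.
  have -> : pref pi i :&: (A :&: pref pi i.+1) = A :&: pref pi i.
    apply/setP => j; rewrite (pref_id pi j); move: (pi^-1 j)%g => l.
    rewrite !inE !mem_pref.
    case: (eqVneq l i) => [->|ne]; first by rewrite ltnn andbF.
    have ne2 : (nat_of_ord l == i) = false := negbTE ne.
    by rewrite [(l < i.+1)%N]ltnS [(l <= i)%N]leq_eqVlt ne2 /=; case: (l < i)%N; rewrite ?andbT ?andbF.
  lra.
have -> : A :&: pref pi i.+1 = A :&: pref pi i.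
  apply/setP => j; rewrite (pref_id pi j); move: (pi^-1 j)%g => l.
  rewrite !inE !mem_pref.
  case: (eqVneq l i) => [->|ne]; first by rewrite hA.
    have ne2 : (nat_of_ord l == i) = false := negbTE ne.
  by rewrite [(l < i.+1)%N]ltnS [(l <= i)%N]leq_eqVlt ne2.
by rewrite subrr.
Qed.

Lemma prefI pi a b : pref pi a :&: pref pi b = pref pi (minn a b).
Proof.
by apply/setP => j; rewrite (pref_id pi j) !inE !mem_pref leq_min.
Qed.

Lemma ww_eq f s m : ww f s (pref s m) = f (pref s m) - f set0.
Proof.
have -> : f (pref s m) - f set0 = \sum_(i < k) (f (pref s m :&: pref s i.+1) - f (pref s m :&: pref s i)).
  rewrite (tele0 (fun i => f (pref s m :&: pref s i))) pref0 (prefT _ (leqnn k)) setI0 setIT //.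
rewrite /ww; apply: eq_bigr => i _; rewrite /dd !prefI mem_pref.
case: ifP => h.
  by rewrite (minn_idPr h) (minn_idPr (ltnW h)).
by move/negbT: h; rewrite -leqNgt => h; rewrite (minn_idPl h) (minn_idPl (leqW h)) subrr.
Qed.
End Aux.

Section Greedy.
Variables (R : realFieldType) (k : nat).
Implicit Types (pi s : {perm 'I_k}) (f : {set 'I_k} -> R) (x : 'I_k -> R).

Definition XX x s (n : nat) : R := \sum_(i < k | val i == n) x (s i).

Lemma XX_ord x s (i : 'I_k) : XX x s i = x (s i).
Proof. by rewrite /XX (big_pred1 i) // => j; rewrite /= val_eqE. Qed.

Lemma XX_big x s n : (k <= n)%N -> XX x s n = 0.
Proof.
move=> hn; rewrite /XX big1 // => i /eqP hi.
by move: (ltn_ord i); rewrite hi ltnNge hn.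
Qed.

Lemma xrep x s (j : 'I_k) :
  x j = \sum_(m < k) (if j \in pref s m.+1 then XX x s m - XX x s m.+1 else 0).
Proof.
rewrite (pref_id s j); move: (s^-1 j)%g => r.
under eq_bigr => m _ do rewrite mem_pref ltnS.
by rewrite (tele (XX x s)) ?XX_ord ?XX_big ?subr0 // ltnW.
Qed.

Lemma abel f x s pi :
  lov_sum f x pi = \sum_(m < k) (XX x s m - XX x s m.+1) * ww f pi (pref s m.+1).
Proof.
rewrite /lov_sum.
under eq_bigr => i _ do rewrite (xrep x s (pi i)) mulr_suml.
rewrite exchange_big; apply: eq_bigr => m _.
rewrite /ww mulr_sumr; apply: eq_bigr => i _.
by case: ifP => _; rewrite ?mul0r ?mulr0 // mulrC.
Qed.

Lemma greedy f x s pi : Defs.submodular f -> (forall j, 0 <= x j) ->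
  (forall i j : 'I_k, (i < j)%N -> x (s j) <= x (s i)) ->
  lov_sum f x pi <= lov_sum f x s.
Proof.
move=> sm x0 sorted; rewrite (abel f x s pi) (abel f x s s).
apply: ler_sum => m _.
apply: ler_wpM2l.
  rewrite XX_ord subr_ge0.
  case: (ltnP m.+1 k) => h.
    by rewrite (XX_ord x s (Ordinal h)); apply: sorted => /=.
  by rewrite XX_big.
by rewrite ww_eq; apply: ww_le.
Qed.

Lemma lovasz_greedy f x s : Defs.submodular f -> (forall j, 0 <= x j) ->
  (forall i j : 'I_k, (i < j)%N -> x (s j) <= x (s i)) ->
  lovasz f x = lov_sum f x s.
Proof.
move=> sm x0 sorted; apply/le_anti/andP; split.
  rewrite /lovasz; apply: (big_ind (fun v => v <= lov_sum f x s)).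
  - exact: greedy.
  - by move=> a b ha hb; rewrite ge_max ha hb.
  - by move=> pi _; apply: greedy.
by rewrite /lovasz (bigD1 s) //= le_max lexx.
Qed.
End Greedy.

Section Sort.
Variables (k : nat).

Lemma sort_perm (lt : rel 'I_k) : irreflexive lt -> transitive lt ->
  (forall a b, a != b -> lt a b || lt b a) ->
  exists s : {perm 'I_k}, forall i j : 'I_k, (i < j)%N -> lt (s i) (s j).
Proof.
move=> irr tr tot.
pose rk a := #|[set b | lt b a]|.
have rk_lt a : (rk a < k)%N.
  apply: (@leq_trans #|[set: 'I_k]|); last by rewrite cardsT card_ord.
  apply: proper_card; apply/properP; split.
    exact: subsetT.
  by exists a; rewrite ?inE ?irr.
have rk_mono a b : lt a b -> (rk a < rk b)%N.
  move=> hab; apply: proper_card; apply/properP; split.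
    by apply/subsetP => c; rewrite !inE => hc; apply: tr hab.
  by exists a; rewrite !inE ?irr.
pose rf a := Ordinal (rk_lt a).
have rf_inj : injective rf.
  move=> a b /(congr1 val) /= e; apply/eqP; apply/negPn/negP => ne.
  by case/orP: (tot a b ne) => /rk_mono; rewrite e ltnn.
exists (perm rf_inj)^-1%g => i j hij.
set a := _ i; set b := _ j.
have ea : rk a = i by have := permKV (perm rf_inj) i; rewrite permE => /(congr1 val).
have eb : rk b = j by have := permKV (perm rf_inj) j; rewrite permE => /(congr1 val).
have nab : a != b.
  apply/eqP => /perm_inj e; by move: hij; rewrite e ltnn.
case/orP: (tot a b nab) => // /rk_mono; rewrite ea eb => h.
by move: (ltn_trans h hij); rewrite ltnn.
Qed.
End Sort.

Section Main.
Variables (R : realFieldType) (k : nat).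
Implicit Types (pi s : {perm 'I_k}) (f : {set 'I_k} -> R) (x y u : 'I_k -> R).

Definition tt (lam : 'I_k.+1 -> R) pi (j : 'I_k) := \sum_(i < k.+1) lam i * ind R pi i j.

Lemma ind_pi pi (i : nat) (l : 'I_k) : ind R pi i (pi l) = if (l < i)%N then 1 else 0.
Proof. by rewrite /ind mem_pref. Qed.

Lemma Ppy_t pi y u : Ppy pi y u -> exists lam : 'I_k.+1 -> R,
  [/\ forall i, 0 <= lam i, \sum_(i < k.+1) lam i = 1 & forall j, u j = tt lam pi j * y j].
Proof.
case=> lam [l0 [l1 hu]]; exists lam; split => // j.
by rewrite hu /tt mulr_suml; apply: eq_bigr => i _; rewrite mulrA.
Qed.

Lemma tt_ge0 lam pi j : (forall i, 0 <= lam i) -> 0 <= tt lam pi j.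
Proof.
move=> l0; apply: sumr_ge0 => i _; rewrite /ind; case: ifP => _.
by rewrite mulr1. by rewrite mulr0.
Qed.

Lemma tt_le1 lam pi j : (forall i, 0 <= lam i) -> \sum_(i < k.+1) lam i = 1 -> tt lam pi j <= 1.
Proof.
move=> l0 l1; rewrite -l1; apply: ler_sum => i _; rewrite /ind; case: ifP => _.
by rewrite mulr1. by rewrite mulr0.
Qed.

Lemma tt_mono lam pi a b : (forall i, 0 <= lam i) -> ((pi^-1 a)%g <= (pi^-1 b)%g)%N ->
  tt lam pi b <= tt lam pi a.
Proof.
move=> l0 hab; apply: ler_sum => i _.
rewrite (pref_id pi a) (pref_id pi b) !ind_pi.
case: ifP => h1; case: ifP => h2 //.
  by move: h2; rewrite (leq_ltn_trans hab h1).
by rewrite mulr0 mulr1.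
Qed.

Lemma sign_cases y j : is_sign y -> y j = 1 \/ y j = -1.
Proof. by move=> /(_ j). Qed.

Lemma part1_bwd pi y u : is_sign y -> Ppy pi y u -> forall j, -1 <= u j <= 1.
Proof.
move=> sy /Ppy_t [lam [l0 l1 hu]] j.
have h0 := tt_ge0 pi j l0; have h1 := tt_le1 pi j l0 l1.
rewrite hu; case: (sign_cases j sy) => ->; apply/andP; split; lra.
Qed.

Lemma XX_bnd x s n : (forall j, 0 <= x j <= 1) -> 0 <= XX x s n <= 1.
Proof.
move=> hx; case: (ltnP n k) => h.
  by rewrite (XX_ord x s (Ordinal h)).
by rewrite XX_big // lexx ler01.
Qed.

Lemma XX_dec x s n : (forall j, 0 <= x j) ->
  (forall i j : 'I_k, (i < j)%N -> x (s j) <= x (s i)) -> XX x s n.+1 <= XX x s n.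
Proof.
move=> x0 sorted; case: (ltnP n.+1 k) => h.
  rewrite (XX_ord x s (Ordinal h)) (XX_ord x s (Ordinal (ltnW h))).
  by apply: sorted => /=.
by rewrite (XX_big _ _ h); case: (ltnP n k) => h2;
  [rewrite (XX_ord x s (Ordinal h2)) | rewrite XX_big].
Qed.

Lemma part1_fwd u : (forall j, -1 <= u j <= 1) ->
  exists y (pi : {perm 'I_k}), is_sign y /\ Ppy pi y u.
Proof.
move=> hu.
pose y j : R := if 0 <= u j then 1 else -1.
pose av j := u j * y j.
have y2 j : y j * y j = 1 by rewrite /y; case: ifP => _; lra.
have av01 j : 0 <= av j <= 1.
  have := hu j; rewrite /av /y; case: ifP => h /andP [h1 h2]; apply/andP; split;
  rewrite ?mulr1 ?mulrN1; lra.
pose lt := fun a b : 'I_k => (av b < av a) || ((av a == av b) && (a < b)%N).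
have [s hs] : exists s : {perm 'I_k}, forall i j : 'I_k, (i < j)%N -> lt (s i) (s j).
  apply: sort_perm.
  - by move=> a; rewrite /lt ltxx eqxx ltnn.
  - move=> b a c /orP[h1|/andP[/eqP e1 h1]] /orP[h2|/andP[/eqP e2 h2]]; apply/orP.
    + by left; apply: lt_trans h1.
    + by left; rewrite -e2.
    + by left; rewrite e1.
    + by right; rewrite e1 e2 eqxx (ltn_trans h1 h2).
  - move=> a b ne; rewrite /lt; case: (eqVneq (av a) (av b)) => [e|ne2].
      rewrite e ltxx /=.
      by case: (ltngtP a b) => // /val_inj e2; move: ne; rewrite e2 eqxx.
    by rewrite /= !orbF; case: (ltgtP (av a) (av b)) ne2 => // ->; rewrite eqxx.
have sorted (i j : 'I_k) : (i < j)%N -> av (s j) <= av (s i).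
  by move=> /hs /orP [/ltW //|/andP [/eqP -> _]].
have av0 j : 0 <= av j by case/andP: (av01 j).
pose C n := if n is n'.+1 then XX av s n' else 1.
pose lam (i : 'I_k.+1) := C i - C i.+1.
exists y, s; split.
  by move=> j; rewrite /y; case: ifP; [left|right].
exists lam; split; [|split].
- move=> i; rewrite /lam subr_ge0; case: i => [[|n] hn] /=.
    by case/andP: (XX_bnd s 0 av01).
  exact: XX_dec.
- have := tele C (leq0n k.+1).
  rewrite /= (XX_big _ _ (leqnn k)) subr0 => <-.
  by apply: eq_bigr => i _; rewrite ?leq0n.
- move=> j; rewrite (pref_id s j); move: (s^-1 j)%g => r.
  transitivity ((\sum_(i < k.+1) (if (r.+1 <= i)%N then C i - C i.+1 else 0)) * y (s r)).
    rewrite tele //=; last exact: ltnW (ltn_ord r).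
    by rewrite (XX_big _ _ (leqnn k)) subr0 XX_ord /av -mulrA y2 mulr1.
  rewrite mulr_suml; apply: eq_bigr => i _; rewrite ind_pi /lam.
  by case: ifP => _; rewrite ?mul0r ?mul1r ?mulr0.
Qed.

End Main.

Section Main2.
Variables (R : realFieldType) (k : nat).

Lemma part2 (f : {set 'I_k} -> R) (y y' : 'I_k -> R) (pi : {perm 'I_k}) :
  in_Fk f -> is_sign y -> is_sign y' ->
  affine_on (fun u => lhinge f u y') (Ppy pi y).
Proof.
case=> sm _ _ sy sy'.
pose sg j := y j * y' j.
have sg_cases j : sg j = 1 \/ sg j = -1.
  by rewrite /sg; case: (sign_cases j sy) => ->; case: (sign_cases j sy') => ->; lra.
pose rk (j : 'I_k) : nat := (pi^-1 j)%g.
have rk_lt j : (rk j < k)%N by apply: ltn_ord.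
pose key j := if sg j < 0 then rk j else (k + (k - rk j))%N.
have [s hs] : exists s : {perm 'I_k}, forall i j : 'I_k, (i < j)%N -> (key (s i) < key (s j))%N.
  apply: (@sort_perm k (fun a b => key a < key b)%N).
  - by move=> a; rewrite /= ltnn.
  - by move=> b a c; apply: ltn_trans.
  - move=> a b ne /=.
    have : key a != key b.
      apply: contra ne => /eqP e; apply/eqP.
      suff : rk a = rk b by move/val_inj/perm_inj.
      move: e; rewrite /key; have := rk_lt a; have := rk_lt b.
      case: (sg a < 0); case: (sg b < 0); lia.
    by case: ltngtP.
exists (fun j => - y' j * dd f s (s^-1 j)%g), (\sum_(i < k) dd f s i).
move=> u /Ppy_t [lam [l0 l1 hu]].
have t0 j := tt_ge0 pi j l0; have t1 j := tt_le1 pi j l0 l1.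
have ex j : Num.max 0 (1 - u j * y' j) = 1 - tt lam pi j * sg j.
  rewrite hu /sg -mulrA max_r //.
  case: (sg_cases j); rewrite /sg => ->; have := t0 j; have := t1 j; lra.
rewrite /lhinge (lovasz_greedy (s := s) sm).
- rewrite /lov_sum.
  rewrite [X in _ = X + _](reindex_inj (@perm_inj _ s)) /= -big_split /=.
  apply: eq_bigr => i _; rewrite ex hu permK /dd /sg; ring.
- by move=> j; rewrite ex; case: (sg_cases j) => ->; have := t0 j; have := t1 j; lra.
move=> i j /hs; rewrite !ex /key.
set a := s i; set b := s j.
have ta := t0 a; have tb := t0 b.
have := rk_lt a; have := rk_lt b.
case: (sg_cases a) => ->; case: (sg_cases b) => ->;
  rewrite ?ltr10 ?ltrN10 /= => ha hb hk.
- have : (rk b <= rk a)%N by lia.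
  move=> /(tt_mono l0) h; lra.
- lia.
- lra.
- have : (rk a <= rk b)%N by lia.
  move=> /(tt_mono l0) h; lra.
Qed.
End Main2.


Unset Implicit Arguments.

Theorem lemma3 (R : realFieldType) (k : nat) :
  (forall u : 'I_k -> R,
     (forall j, -1 <= u j <= 1) <->
     exists (y : 'I_k -> R) (pi : {perm 'I_k}), is_sign y /\ Ppy pi y u)
  /\
  (forall (f : {set 'I_k} -> R) (y y' : 'I_k -> R) (pi : {perm 'I_k}),
     in_Fk f -> is_sign y -> is_sign y' ->
     affine_on (fun u => lhinge f u y') (Ppy pi y)).
Proof.
split.
  move=> u; split; first exact: part1_fwd.
  by case=> y [pi [sy hp]]; apply: (part1_bwd sy hp).
exact: part2.
Qed.
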